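(* Consider $N$ nodes communicating over a fixed, undirected, connected graph $\mathcal{G}=(\mathcal{V},\mathcal{E})$ with $\mathcal{V}=\{1,\dots,N\}$ and diameter $d_G$, running the asynchronous distributed logic-AND algorithm described in the context. Assume that for each node $i$ there exists $\bar T_i$ such that the waiting time satisfies $T_i\le \bar T_i$ in every awakening cycle. Suppose that when a flag $C_i$ switches from $0$ to $1$, it remains equal to $1$ indefinitely. Then a node $i$ satisfies $\prod_{b=1}^{d_i}S_i[d_G,b]=1$ in finite time if and only if at a certain time instant one has $C_j=1$ for all $j\in\mathcal{V}$.
   Context: Notation: $\mathcal{N}_i=\{j\in\mathcal{V}:(i,j)\in\mathcal{E}\}\cup\{i\}$ is the set of neighbors of node $i$ including $i$ itself, and $d_i=|\mathcal{N}_i|$. For a matrix $A$, $A[l,j]$ is its $(l,j)$ entry, $A[:,j]$ its $j$-th column, $A[l,:]$ its $l$-th row; writing $A[l,:]\gets 1$ sets all entries of row $l$ to $1$. Asynchronous communication model: each node has a local clock $\tau_i$ and a waiting time $T_i$. While $\tau_i<T_i$ the node is IDLE (it listens for messages from neighbors and may update local variables). When $\tau_i=T_i$ it becomes AWAKE, performs local computations, broadcasts information to its neighbors, resets $\tau_i=0$ and selects a new waiting time $T_i$. Logic-AND algorithm: each node $i$ has a flag $C_i\in\{0,1\}$, initially $0$, and a matrix $S_i\in\{0,1\}^{d_G\times d_i}$, initially zero. The columns of $S_i$ are indexed by the neighbors: node $i$ assigns to each $j\in\mathcal{N}_i\setminus\{i\}$ a column index $j|_i$, and column $d_i$ refers to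 node $i$ itself. When AWAKE, node $i$ does: if $\prod_{l=1}^{d_i}S_i[d_G,l]\neq 1$, set $S_i[1,d_i]\gets C_i$, then set $S_i[l,d_i]\gets\prod_{b=1}^{d_i}S_i[l-1,b]$ for $l=2,\dots,d_G$, and broadcast the column $S_i[:,d_i]$ to all $j\in\mathcal{N}_i\setminus\{i\}$. Then, if $\prod_{l=1}^{d_i}S_i[d_G,l]=1$, node $i$ stops and sends a STOP signal to all $j\in\mathcal{N}_i\setminus\{i\}$. When IDLE, node $i$ does: if a column $S_j[:,d_j]$ is received from $j\in\mathcal{N}_i\setminus\{i\}$ and no STOP signal has been received, set $S_i[l,j|_i]\gets S_j[l,d_j]$ for $l=1,\dots,d_G$; if a STOP signal is received, set $S_i[d_G,:]\gets 1$. *)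

(* Defs.v *)
From mathcomp Require Import all_boot.
Set Implicit Arguments. Unset Strict Implicit. Unset Printing Implicit Defensive.

(* Nodes are 'I_N (= {0,..,N-1}, i.e. {1,..,N} shifted).  The graph is a
   boolean adjacency relation [adj] on 'I_N. *)

Section Graph.
Variable N : nat.
Variable adj : rel 'I_N.

Fixpoint reach (k : nat) (i j : 'I_N) : bool :=
  if k is k'.+1 then reach k' i j || [exists m, reach k' i m && adj m j]
  else i == j.

(* graph distance (first k < N with reach k i j; N if none) *)
Definition dist (i j : 'I_N) : nat := find (fun k => reach k i j) (iota 0 N).

Definition diameter : nat := \max_(i : 'I_N) \max_(j : 'I_N) dist i j.

Definition nbr (i : 'I_N) : pred 'I_N := [pred j | (j == i) || adj i j].
End Graph.

Section Alg.
Variable N : nat.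
Variable adj : rel 'I_N.
Variable dG : nat.

(* Local state of a node: the matrix S_i, with rows indexed by l = 1..dG
   and columns indexed directly by the node j in N_i that the column refers
   to (column d_i <-> node i itself, column j|_i <-> node j); a flag telling
   whether the node has stopped, and a flag telling whether a STOP signal
   has been received. *)
Record nstate := NState {
  mat : nat -> 'I_N -> bool;
  stopped : bool;
  stoprec : bool }.

Definition init_state : nstate := NState (fun _ _ => false) false false.

Definition row_one (i : 'I_N) (M : nat -> 'I_N -> bool) (l : nat) : bool :=
  [forall j, (j \in nbr adj i) ==> M l j].

(* New own column S_i[:,d_i] computed when AWAKE: entry 1 is C_i, entry l+1 is
   the product of row l, where the own entry of row l is the freshly
   updated one (sequential loop l = 2..dG). *)
Fixpoint own_col (i : 'I_N) (M : nat -> 'I_N -> bool) (c : bool) (l : nat)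
  : bool :=
  match l with
  | 0 => false
  | 1 => c
  | l'.+1 => [forall b, (b \in nbr adj i) ==>
                 (if b == i then own_col i M c l' else M l' b)]
  end.

Definition own_mat (i : 'I_N) (M : nat -> 'I_N -> bool) (c : bool)
  : nat -> 'I_N -> bool :=
  fun l j => if (j == i) && (0 < l <= dG) then own_col i M c l else M l j.

Definition active (aw : bool) (s : nstate) : bool := aw && ~~ stopped s.

Definition broadcasts (aw : bool) (i : 'I_N) (s : nstate) : bool :=
  active aw s && ~~ row_one i (mat s) dG.

Definition mat_after_own (aw c : bool) (i : 'I_N) (s : nstate) :=
  if broadcasts aw i s then own_mat i (mat s) c else mat s.

Definition sends_stop (aw c : bool) (i : 'I_N) (s : nstate) : bool :=
  active aw s && row_one i (mat_after_own aw c i s) dG.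

(* Awake nodes perform their local
   computation; messages (columns, STOP) sent at this instant are received
   by the neighbours that have not stopped. *)
Definition step (aw C : 'I_N -> bool) (X : 'I_N -> nstate) : 'I_N -> nstate :=
  fun i =>
  let s := X i in
  let M1 := mat_after_own (aw i) (C i) i s in
  if stopped s || sends_stop (aw i) (C i) i s then NState M1 true (stoprec s)
  else
  let stopin := [exists k, [&& adj i k, k != i &
                              sends_stop (aw k) (C k) k (X k)]] in
  let M2 := fun l k =>
    if [&& adj i k, k != i, broadcasts (aw k) k (X k), ~~ stoprec s
         & 0 < l <= dG]
    then own_col k (mat (X k)) (C k) l else M1 l k in
  let M3 := fun l k => if stopin && (l == dG) then true else M2 l k in
  NState M3 false (stoprec s || stopin).

Fixpoint run (aw C : nat -> 'I_N -> bool) (t : nat) : 'I_N -> nstate :=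
  if t is t'.+1 then step (aw t') (C t') (run aw C t')
  else fun _ => init_state.
End Alg.

(* Main.v *)
From Stdlib Require Import Classical.
Require Import Defs.
From mathcomp Require Import all_boot.
Set Implicit Arguments. Unset Strict Implicit.

Lemma reachS N (adj : rel 'I_N) n i k : reach adj n i k -> reach adj n.+1 i k.
Proof. by move=> h /=; rewrite h. Qed.

Lemma reach_mono N (adj : rel 'I_N) n m i k : n <= m -> reach adj n i k -> reach adj m i k.
Proof.
move=> /subnK <-; elim: (m - n) => [|d IH] //= h.
by rewrite (IH h).
Qed.

Lemma reach_front N (adj : rel 'I_N) n i k :
  reach adj n.+1 i k -> exists2 b, b \in nbr adj i & reach adj n b k.
Proof.
elim: n k => [|n IH] k.
  rewrite /= => /orP[/eqP->|/existsP[m /andP[/eqP<- a]]].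
    by exists k; rewrite // inE eqxx.
  by exists k; rewrite ?inE ?a ?orbT.
rewrite [reach _ n.+2 _ _]/= => /orP[/IH[b bn r]|/existsP[m /andP[/IH[b bn r] a]]].
  by exists b => //; apply: reachS.
exists b => //=; apply/orP; right; apply/existsP; exists m; by rewrite r a.
Qed.

Lemma reach_path N (adj : rel 'I_N) x p : path adj x p -> reach adj (size p) x (last x p).
Proof.
elim/last_ind: p => [|p y IH] /=; first by rewrite eqxx.
rewrite rcons_path => /andP[pp a]; rewrite size_rcons last_rcons /=.
apply/orP; right; apply/existsP; exists (last x p); by rewrite IH.
Qed.

Lemma reach_conn N (adj : rel 'I_N) i k : connect adj i k -> exists2 n, n < N & reach adj n i k.
Proof.
move=> /connectP[p pp ->]; case: (shortenP pp) => q qp uq _.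
exists (size q); last exact: reach_path.
have : size (i :: q) <= #|'I_N|.
  rewrite -(card_uniqP uq); apply: max_card.
by rewrite card_ord.
Qed.

Lemma dist_le N (adj : rel 'I_N) i j : dist adj i j <= diameter adj.
Proof.
rewrite /diameter; apply: (leq_trans _ (leq_bigmax i)).
exact: (leq_bigmax (F := fun j => dist adj i j) j).
Qed.

Lemma reach_diam N (adj : rel 'I_N) i k : connect adj i k -> reach adj (diameter adj) i k.
Proof.
move=> /reach_conn[n nN r]; apply: (reach_mono (dist_le adj i k)).
have hh : has (fun k0 => reach adj k0 i k) (iota 0 N).
  by apply/hasP; exists n => //; rewrite mem_iota.
have := nth_find 0 hh; rewrite /dist.
have hf := hh; rewrite has_find size_iota in hf.
by rewrite nth_iota ?add0n.
Qed.

Lemma diam_pos N (adj : rel 'I_N) (i j : 'I_N) : i != j -> 0 < diameter adj.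
Proof.
move=> ij; apply: leq_trans (dist_le adj i j).
rewrite /dist; have -> : iota 0 N = 0 :: iota 1 N.-1.
  have hN : 0 < N := leq_ltn_trans (leq0n i) (ltn_ord i).
  by clear -hN; case: N hN.
by rewrite /= (negbTE ij).
Qed.

Definition sound N (adj : rel 'I_N) (Ct : 'I_N -> bool) (M : nat -> 'I_N -> bool) :=
  forall l j, M l j -> ~ (forall k, Ct k) -> forall k, reach adj l.-1 j k -> Ct k.

Lemma own_col_sound N (adj : rel 'I_N) Ct M i l :
  sound adj Ct M -> own_col adj i M (Ct i) l -> ~ (forall k, Ct k) ->
  forall k, reach adj l.-1 i k -> Ct k.
Proof.
move=> sM; elim: l => [|[|l] IH] //.
  by move=> ci _ k /eqP <-.
move=> /forallP h nG k r; have [b bn {}r] := reach_front r.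
have := h b; rewrite bn /=; case: (b =P i) => [eb|_] hb.
  by subst b; exact: (IH hb nG k r).
exact: (sM _ _ hb nG k r).
Qed.

Lemma own_mat_sound N (adj : rel 'I_N) dG Ct M i :
  sound adj Ct M -> sound adj Ct (own_mat adj dG i M (Ct i)).
Proof.
move=> sM l j; rewrite /own_mat; case: ifP => [/andP[/eqP-> _]|_].
  exact: own_col_sound.
exact: sM.
Qed.

Lemma mao_sound N (adj : rel 'I_N) dG Ct s a i :
  sound adj Ct (mat s) -> sound adj Ct (mat_after_own adj dG a (Ct i) i s).
Proof.
by move=> sM; rewrite /mat_after_own; case: ifP => _ //; apply: own_mat_sound.
Qed.

Lemma row_one_G N (adj : rel 'I_N) dG Ct M i :
  (forall k, reach adj dG i k) -> 0 < dG -> sound adj Ct M ->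
  row_one adj i M dG -> forall k, Ct k.
Proof.
move=> hr d0 sM /forallP ro; apply: (@NNPP (forall k, Ct k)) => nG; apply: (nG) => k.
have := hr k; rewrite -(prednK d0) => /reach_front[b bn r].
have := ro b; rewrite bn /= => hb.
exact: (sM _ _ hb nG k r).
Qed.

Lemma sound_mono N (adj : rel 'I_N) (C1 C2 : 'I_N -> bool) M :
  (forall k, C1 k -> C2 k) -> sound adj C1 M -> sound adj C2 M.
Proof.
move=> h sM l j Mj nG k r; apply: (h); apply: (sM l j Mj) => // G1.
by apply: nG => k'; apply: h.
Qed.

Lemma inv_step N (adj : rel 'I_N) dG (aw C : nat -> 'I_N -> bool) t :
  (forall i k, reach adj dG i k) -> 0 < dG ->
  (forall i, C t i -> C t.+1 i) ->
  (forall i, sound adj (C t) (mat (run adj dG aw C t i))) ->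
  forall i, sound adj (C t.+1) (mat (run adj dG aw C t.+1 i)).
Proof.
move=> hr d0 hC IH i; apply: (sound_mono hC).
rewrite [run _ _ _ _ t.+1]/= /step.
set X := run adj dG aw C t.
case: ifP => _ /=; first by apply: mao_sound; apply: IH.
move=> l j; case: ifP => [/andP[/existsP[k /and3P[_ _ ss]] _]|_].
  move=> _ nG; exfalso; apply: nG.
  move: ss => /andP[_ ro]; apply: (row_one_G (hr k) d0 _ ro).
  by apply: mao_sound; apply: IH.
case: ifP => _.
  by apply: own_col_sound.
by apply: mao_sound.
Qed.

Lemma inv_all N (adj : rel 'I_N) dG (aw C : nat -> 'I_N -> bool) :
  (forall i k, reach adj dG i k) -> 0 < dG ->
  (forall t i, C t i -> C t.+1 i) ->
  forall t i, sound adj (C t) (mat (run adj dG aw C t i)).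
Proof.
move=> hr d0 hC; elim=> [|t IH]; first by move=> i l j.
by apply: inv_step => //; apply: hC.
Qed.

Lemma run_S N (adj : rel 'I_N) dG (aw C : nat -> 'I_N -> bool) t i :
  run adj dG aw C t.+1 i = step adj dG (aw t) (C t) (run adj dG aw C t) i.
Proof. by []. Qed.

Lemma stopped_persist N (adj : rel 'I_N) dG (aw C : nat -> 'I_N -> bool) t k :
  stopped (run adj dG aw C t k) ->
  stopped (run adj dG aw C t.+1 k) /\ mat (run adj dG aw C t.+1 k) = mat (run adj dG aw C t k).
Proof.
move=> st; rewrite run_S /step st /=; split=> //.
by rewrite /mat_after_own /broadcasts /active st andbF.
Qed.

Lemma stopped_row N (adj : rel 'I_N) dG (aw C : nat -> 'I_N -> bool) t k :
  stopped (run adj dG aw C t k) -> row_one adj k (mat (run adj dG aw C t k)) dG.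
Proof.
elim: t => [|t IH] //.
rewrite run_S /step; case: ifP => //= /orP[st|ss] _.
  by rewrite /mat_after_own /broadcasts /active st andbF /=; apply: IH.
by move: ss => /andP[].
Qed.

Lemma stopped_from_send N (adj : rel 'I_N) dG (aw C : nat -> 'I_N -> bool) t k :
  stopped (run adj dG aw C t k) ->
  exists s, sends_stop adj dG (aw s k) (C s k) k (run adj dG aw C s k).
Proof.
elim: t => [|t IH] //.
rewrite run_S /step; case: ifP => //= /orP[st|ss] _; first exact: IH.
by exists t.
Qed.

Lemma send_stopped N (adj : rel 'I_N) dG (aw C : nat -> 'I_N -> bool) s k :
  sends_stop adj dG (aw s k) (C s k) k (run adj dG aw C s k) ->
  stopped (run adj dG aw C s.+1 k).
Proof. by move=> ss; rewrite run_S /step ss orbT. Qed.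

Definition Qs N (adj : rel 'I_N) dG (x : nstate N) j :=
  stopped x || (stoprec x && row_one adj j (mat x) dG).

Lemma Qs_neighbor N (adj : rel 'I_N) dG (aw C : nat -> 'I_N -> bool) s k j :
  adj j k -> k != j ->
  sends_stop adj dG (aw s k) (C s k) k (run adj dG aw C s k) ->
  Qs adj dG (run adj dG aw C s.+1 j) j.
Proof.
move=> a kj ss; rewrite /Qs.
case E: (stopped (run adj dG aw C s.+1 j)) => //=.
have hin : [exists k0, [&& adj j k0, k0 != j &
     sends_stop adj dG (aw s k0) (C s k0) k0 (run adj dG aw C s k0)]].
  by apply/existsP; exists k; rewrite a kj ss.
move: E; rewrite /step; case: ifP => //= _ _.
rewrite hin orbT /=; apply/forallP => b; apply/implyP => _.
by rewrite eqxx.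
Qed.

Lemma Qs_step N (adj : rel 'I_N) dG (aw C : nat -> 'I_N -> bool) t j :
  Qs adj dG (run adj dG aw C t j) j -> Qs adj dG (run adj dG aw C t.+1 j) j.
Proof.
rewrite /Qs; case/orP=> [st|/andP[sr ro]].
  by rewrite (stopped_persist st).1.
rewrite run_S /step; case: ifP => //= _.
have bf : broadcasts adj dG (aw t j) j (run adj dG aw C t j) = false.
  by rewrite /broadcasts ro andbF.
rewrite sr /=; apply/forallP => b; apply/implyP => bn.
case: ifP => // _; rewrite !andbF /= /mat_after_own bf.
by move: ro => /forallP/(_ b); rewrite bn.
Qed.

Lemma Qs_aw N (adj : rel 'I_N) dG (aw C : nat -> 'I_N -> bool) t j :
  Qs adj dG (run adj dG aw C t j) j -> aw t j -> stopped (run adj dG aw C t.+1 j).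
Proof.
rewrite /Qs; case/orP=> [st|/andP[sr ro]] a.
  by case: (stopped_persist st).
case E: (stopped (run adj dG aw C t j)); first by case: (stopped_persist E).
apply: send_stopped.
have bf : broadcasts adj dG (aw t j) j (run adj dG aw C t j) = false.
  by rewrite /broadcasts ro andbF.
by rewrite /sends_stop /active /mat_after_own bf a E.
Qed.

Lemma flood N (adj : rel 'I_N) dG (aw C : nat -> 'I_N -> bool) t k j :
  (forall i, exists Tb, forall t, exists2 s, t <= s <= t + Tb & aw s i) ->
  adj j k -> k != j -> stopped (run adj dG aw C t k) ->
  exists t', stopped (run adj dG aw C t' j).
Proof.
move=> hw a kj /stopped_from_send[s ss].
have q0 := Qs_neighbor a kj ss.
have qn : forall n, Qs adj dG (run adj dG aw C (s.+1 + n) j) j.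
  by elim=> [|n IH]; rewrite ?addn0 // addnS; apply: Qs_step.
case: (hw j) => Tb /(_ s.+1) [s' /andP[h1 _] aws].
exists s'.+1; apply: Qs_aw aws.
by have := qn (s' - s.+1); rewrite subnKC.
Qed.

Lemma flood_all N (adj : rel 'I_N) dG (aw C : nat -> 'I_N -> bool) t k j :
  symmetric adj -> irreflexive adj ->
  (forall i, exists Tb, forall t, exists2 s, t <= s <= t + Tb & aw s i) ->
  connect adj k j -> stopped (run adj dG aw C t k) ->
  exists t', stopped (run adj dG aw C t' j).
Proof.
move=> sy ir hw /connectP[p pp ->]; elim: p k t pp => [|y p IH] k t /=.
  by move=> _ st; exists t.
case/andP=> a pp st.
have ky : k != y by apply/eqP => e; move: a; rewrite e ir.
have a' : adj y k by rewrite sy.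
have [t' st'] := flood hw a' ky st.
exact: IH st'.
Qed.

Definition nostop N (adj : rel 'I_N) dG (aw C : nat -> 'I_N -> bool) :=
  forall s k, ~~ sends_stop adj dG (aw s k) (C s k) k (run adj dG aw C s k).

Lemma B1 N (adj : rel 'I_N) dG (aw C : nat -> 'I_N -> bool) :
  nostop adj dG aw C ->
  forall t k, ~~ stopped (run adj dG aw C t k) && ~~ stoprec (run adj dG aw C t k).
Proof.
move=> ns; elim=> [|t IH] k //.
rewrite run_S /step.
have /andP[s1 s2] := IH k; rewrite (negbTE s1) (negbTE (ns t k)) /= (negbTE s2) /=.
apply/existsPn => k0; by rewrite (negbTE (ns t k0)) !andbF.
Qed.

Lemma B_bc N (adj : rel 'I_N) dG (aw C : nat -> 'I_N -> bool) t k :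
  nostop adj dG aw C ->
  broadcasts adj dG (aw t k) k (run adj dG aw C t k) = aw t k.
Proof.
move=> ns; have /andP[s1 _] := B1 ns t k.
have := ns t k; rewrite /broadcasts /sends_stop /active /mat_after_own (negbTE s1) !andbT.
rewrite /broadcasts /active (negbTE s1) andbT.
by case: (aw t k) => //=; case E: (row_one adj k (mat (run adj dG aw C t k)) dG) => //=; rewrite E.
Qed.

Lemma B4 N (adj : rel 'I_N) dG (aw C : nat -> 'I_N -> bool) t k :
  nostop adj dG aw C -> aw t k -> ~~ row_one adj k (mat (run adj dG aw C t k)) dG.
Proof. by move=> ns a; have := B_bc t k ns; rewrite /broadcasts a => /andP[]. Qed.

Lemma B2 N (adj : rel 'I_N) dG (aw C : nat -> 'I_N -> bool) t k l :
  nostop adj dG aw C -> irreflexive adj -> 0 < l <= dG ->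
  mat (run adj dG aw C t.+1 k) l k =
  if aw t k then own_col adj k (mat (run adj dG aw C t k)) (C t k) l
  else mat (run adj dG aw C t k) l k.
Proof.
move=> ns ir lr; have /andP[s1 s2] := B1 ns t k.
rewrite run_S /step (negbTE s1) (negbTE (ns t k)) /=.
have -> : [exists k0, [&& adj k k0, k0 != k
   & sends_stop adj dG (aw t k0) (C t k0) k0 (run adj dG aw C t k0)]] = false.
  by apply/existsPn => k0; rewrite (negbTE (ns t k0)) !andbF.
rewrite /= ir /= /mat_after_own B_bc //.
by case: (aw t k) => //; rewrite /own_mat eqxx lr.
Qed.

Lemma B3 N (adj : rel 'I_N) dG (aw C : nat -> 'I_N -> bool) t i k l :
  nostop adj dG aw C -> irreflexive adj -> 0 < l <= dG ->
  adj i k -> k != i ->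
  mat (run adj dG aw C t i) l k = mat (run adj dG aw C t k) l k.
Proof.
move=> ns ir lr a ki; elim: t => [|t IH] //.
rewrite (B2 t k ns ir lr).
have /andP[s1 s2] := B1 ns t i.
rewrite run_S /step (negbTE s1) (negbTE (ns t i)) /=.
have -> : [exists k0, [&& adj i k0, k0 != i
   & sends_stop adj dG (aw t k0) (C t k0) k0 (run adj dG aw C t k0)]] = false.
  by apply/existsPn => k0; rewrite (negbTE (ns t k0)) !andbF.
rewrite /= a ki B_bc // s2 lr /= /mat_after_own.
case: (aw t k) => //; rewrite -IH.
case: ifP => // _; rewrite /own_mat (negbTE ki) //.
Qed.

Lemma own_col_true N (adj : rel 'I_N) i (M : nat -> 'I_N -> bool) (c : bool) l :
  c -> 0 < l ->
  (forall l' b, 0 < l' < l -> b \in nbr adj i -> b != i -> M l' b) ->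
  own_col adj i M c l.
Proof.
move=> hc; elim: l => [|[|l] IH] // _ h.
apply/forallP => b; apply/implyP => bn.
case: (b =P i) => [eb|/eqP bi]; rewrite /=.
  subst b; apply: IH => // l' b' /andP[l0 l1]; apply: h; rewrite ?l0 //= ltnW // ltnS ltnW.
by apply: h bn bi; rewrite ltnSn.
Qed.

Lemma combine N (P : nat -> 'I_N -> Prop) :
  (forall k, exists tk, forall t, tk <= t -> P t k) ->
  exists t0, forall t, t0 <= t -> forall k, P t k.
Proof.
move=> h.
suff [t0 H] : exists t0, forall t, t0 <= t -> forall k, k \in enum 'I_N -> P t k.
  by exists t0 => t tt k; apply: H => //; rewrite mem_enum.
elim: (enum 'I_N) => [|x s [t0 IH]]; first by exists 0.
have [tx Hx] := h x.
exists (maxn tx t0) => t; rewrite geq_max => /andP[h1 h2] k; rewrite inE.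
case/orP=> [/eqP->|ks]; first exact: Hx.
exact: IH.
Qed.

Lemma Cmono N (C : nat -> 'I_N -> bool) T t k :
  (forall t i, C t i -> C t.+1 i) -> T <= t -> C T k -> C t k.
Proof.
move=> hC /subnK <-; elim: (t - T) => [|n IH] //= h.
by rewrite addSn; apply: hC; apply: IH.
Qed.

Lemma claim N (adj : rel 'I_N) dG (aw C : nat -> 'I_N -> bool) T :
  nostop adj dG aw C -> irreflexive adj ->
  (forall i, exists Tb, forall t, exists2 s, t <= s <= t + Tb & aw s i) ->
  (forall t i, C t i -> C t.+1 i) -> (forall k, C T k) ->
  forall l, l <= dG -> exists t0, T <= t0 /\
    forall t, t0 <= t -> forall k l', 0 < l' <= l -> mat (run adj dG aw C t k) l' k.
Proof.
move=> ns ir hw hC hT; elim=> [|l IH] ldG.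
  by exists T; split=> // t _ k l' /andP[a b]; move: (leq_trans a b).
have [t0 [Tt0 H0]] := IH (ltnW ldG).
have key : forall t k, t0 <= t -> aw t k -> mat (run adj dG aw C t.+1 k) l.+1 k.
  move=> t k tt a; rewrite (B2 t k ns ir) ?ldG // a.
  apply: own_col_true => //.
    exact: (Cmono hC (leq_trans Tt0 tt) (hT k)).
  move=> l' b /andP[l0 l1] bn bk.
  have akb : adj k b by move: bn; rewrite inE (negbTE bk).
  rewrite (B3 t ns ir _ akb bk); last by rewrite l0 /=; apply: leq_trans (ltnW ldG).
  by apply: H0 => //; rewrite l0.
have keep : forall t k, t0 <= t -> mat (run adj dG aw C t k) l.+1 k ->
     mat (run adj dG aw C t.+1 k) l.+1 k.
  move=> t k tt h; case a: (aw t k); first exact: key.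
  by rewrite (B2 t k ns ir) ?ldG // a.
have [t1 H1] : exists t1, forall t, t1 <= t -> forall k, mat (run adj dG aw C t k) l.+1 k.
  apply: combine => k.
  have [Tb hTb] := hw k; have [s /andP[s1 _] aws] := hTb t0.
  exists s.+1 => t; move/subnK <-; elim: (t - s.+1) => [|n IHn].
    by rewrite add0n; apply: key.
  rewrite addSn; apply: keep => //.
  exact: (leq_trans s1 (leq_trans (leqnSn s) (leq_addl n s.+1))).
exists (maxn t0 t1); split; first by rewrite (leq_trans Tt0) // leq_maxl.
move=> t; rewrite geq_max => /andP[h0 h1] k l' /andP[l0].
rewrite leq_eqVlt => /orP[/eqP->|l1]; first exact: H1.
by apply: H0 => //; rewrite l0.
Qed.

Lemma caseB N (adj : rel 'I_N) dG (aw C : nat -> 'I_N -> bool) T (i : 'I_N) :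
  0 < dG -> nostop adj dG aw C -> irreflexive adj ->
  (forall i, exists Tb, forall t, exists2 s, t <= s <= t + Tb & aw s i) ->
  (forall t i, C t i -> C t.+1 i) -> (forall k, C T k) -> False.
Proof.
move=> d0 ns ir hw hC hT.
have [t0 [_ H]] := claim ns ir hw hC hT (leqnn dG).
have [Tb hTb] := hw i; have [s /andP[s1 _] aws] := hTb t0.
have := B4 ns aws; apply/negP/negPn/forallP => b; apply/implyP => bn.
case: (b =P i) => [->|/eqP bi].
  by apply: H => //; rewrite d0 leqnn.
have aib : adj i b by move: bn; rewrite inE (negbTE bi).
rewrite (B3 s ns ir _ aib bi); last by rewrite d0 leqnn.
by apply: H => //; rewrite d0 leqnn.
Qed.

Theorem proposition1 (N : nat) (adj : rel 'I_N)
    (aw : nat -> 'I_N -> bool) (C : nat -> 'I_N -> bool) :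
  1 < N ->
  symmetric adj -> irreflexive adj ->
  (forall i j : 'I_N, connect adj i j) ->
  (forall i, exists Tb, forall t, exists2 s, t <= s <= t + Tb & aw s i) ->
  (forall i, C 0 i = false) ->
  (forall t i, C t i -> C t.+1 i) ->
  forall i : 'I_N,
    (exists t, row_one adj i
        (mat (run adj (diameter adj) aw C t i)) (diameter adj))
    <-> (exists t, forall j, C t j).
Proof.
move=> N1 sy ir conn hw _ hC i.
have hr : forall i k, reach adj (diameter adj) i k.
  by move=> i0 k; apply: reach_diam.
have d0 : 0 < diameter adj.
  pose i0 : 'I_N := Ordinal (ltnW N1).
  pose i1 : 'I_N := Ordinal N1.
  by apply: (@diam_pos _ _ i0 i1); apply/eqP => h; have := congr1 val h.
split.
  case=> t ro; exists t.
  apply: (row_one_G (hr i) d0 _ ro); exact: inv_all.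
case=> T hT.
case: (classic (exists s k, sends_stop adj (diameter adj) (aw s k) (C s k) k
                  (run adj (diameter adj) aw C s k))).
  case=> s [k ss]; have st := send_stopped ss.
  have [t' st'] := flood_all sy ir hw (conn k i) st.
  by exists t'; apply: stopped_row.
move=> nex; exfalso; apply: (caseB i d0 _ ir hw hC hT).
by move=> s k; apply/negP => ss; apply: nex; exists s, k.
Qed.
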